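(* Let $X$ and $\Lambda$ be nonempty sets, $x^0\in X$, $f: X\to\mathbb{R}$, and $(f_\lambda)_{\lambda\in\Lambda}$ a family of real-valued functions on $X$ such that the feasible set $X_0:=\{x\in X:\ \sup_{\lambda\in\Lambda}f_\lambda(x)\le0\}$ is nonempty and $(f_\lambda(x))_{\lambda\in\Lambda}\in\ell^\infty(\Lambda)$ for every $x\in X$. Assume the family $(f_\lambda)_{\lambda\in\Lambda}\cup(f-f(x^0))$ is infsup-convex on $X$ and the Slater condition holds: there exists $x^1\in X$ with $\sup_{\lambda\in\Lambda}f_\lambda(x^1)<0$. Then $x^0$ is an optimal solution of $\inf_{x\in X_0}f(x)$ (i.e. $x^0\in X_0$ and $f(x^0)=\inf_{x\in X_0}f(x)$) if and only if $x^0\in X_0$ and there exists $\Phi_0\in\ell^\infty(\Lambda)^*_+$ such that the function $x\mapsto f(x)+\Phi_0((f_\lambda(x))_{\lambda\in\Lambda})$ attains its infimum on $X$ at $x^0$ and $\Phi_0((f_\lambda(x^0))_{\lambda\in\Lambda})=0$.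
   Context: $\ell^\infty(\Lambda)$ is the Banach space of bounded real functions on $\Lambda$ (sup-norm), $\ell^\infty(\Lambda)^*_+$ the cone of positive continuous linear functionals on it. The family $(f_\lambda)_{\lambda\in\Lambda}\cup(f-f(x^0))$ is the family indexed by $\Lambda\cup\{\mu\}$ ($\mu\notin\Lambda$) whose $\mu$-th member is $f-f(x^0)$. With $\Delta_m:=\{\mathbf t\in\mathbb{R}^m: t_j\ge0,\sum t_j=1\}$, a family $(g_i)_{i\in I}$ of real functions on $X$ is infsup-convex on $X$ if for all $m\ge1$, $\mathbf{t}\in\Delta_m$, $x_1,\dots,x_m\in X$: $\inf_{x\in X}\sup_{i\in I}g_i(x)\le\sup_{i\in I}\sum_{j=1}^m t_j g_i(x_j)$. *)

(* Defs.v *)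
From HB Require Import structures.
From mathcomp Require Import all_boot all_order all_algebra.
From mathcomp Require Import all_classical all_reals ereal.
Set Implicit Arguments. Unset Strict Implicit. Unset Printing Implicit Defensive.
Import Order.TTheory GRing.Theory Num.Theory.
Local Open Scope classical_set_scope.
Local Open Scope ring_scope.
Local Open Scope ereal_scope.

Definition esupr {R : realType} {I : Type} (g : I -> R) : \bar R :=
  ereal_sup [set (g i)%:E | i in [set: I]].

Definition einf_on {R : realType} {X : Type} (A : set X) (h : X -> R) : \bar R :=
  ereal_inf [set (h x)%:E | x in A].

Local Close Scope ereal_scope.

Definition is_bounded {R : realType} {L : Type} (u : L -> R) : Prop :=
  exists M : R, forall l, `|u l| <= M.

(* Phi is (the restriction to l^oo(L) of) a positive continuous linear functional
   on l^oo(L) with the sup norm; values of Phi outside l^oo(L) are irrelevant. *)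
Definition pos_cont_lin_functional {R : realType} {L : Type}
    (Phi : (L -> R) -> R) : Prop :=
  [/\ (forall u v, is_bounded u -> is_bounded v -> Phi (u \+ v) = Phi u + Phi v),
      (forall (a : R) u, is_bounded u -> Phi (fun l => a * u l) = a * Phi u),
      (forall u, is_bounded u -> (forall l, 0 <= u l) -> 0 <= Phi u) &
      (exists C : R, forall u (M : R), is_bounded u -> (forall l, `|u l| <= M) ->
          `|Phi u| <= C * M)].

Definition infsup_convex {R : realType} {X I : Type} (g : I -> X -> R) : Prop :=
  forall (m : nat) (t : 'I_m -> R) (xs : 'I_m -> X),
    (0 < m)%N -> (forall j, 0 <= t j) -> \sum_(j < m) t j = 1 ->
    (ereal_inf [set esupr (fun i => g i x) | x in [set: X]] <=
       esupr (fun i => (\sum_(j < m) t j * g i (xs j))%R))%E.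

(* The family (f_lambda)_{lambda in L} ∪ (f - f x0), indexed by option L,
   with None playing the role of the extra index mu. *)
Definition join_family {R : realType} {X L : Type} (F : L -> X -> R)
    (f : X -> R) (x0 : X) : option L -> X -> R :=
  fun i x => match i with Some l => F l x | None => f x - f x0 end.

Definition feasible {R : realType} {X L : Type} (F : L -> X -> R) : set X :=
  [set x | (esupr (fun l => F l x) <= 0)%E].

(* Main.v *)
Require Import Defs.
From HB Require Import structures.
From mathcomp Require Import all_boot all_order all_algebra.
From mathcomp Require Import all_classical all_reals ereal.
From mathcomp Require Import ring lra.
Import Order.TTheory GRing.Theory Num.Theory.
Local Open Scope classical_set_scope.
Local Open Scope ring_scope.
Set Implicit Arguments. Unset Strict Implicit. Unset Printing Implicit Defensive.
Section InfLemmas.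
Variable R : realType.
Variable I : Type.

Lemma inf_le_img (D : set I) (h : I -> R) (b : R) i :
  (forall j, D j -> b <= h j) -> D i -> inf [set h j | j in D] <= h i.
Proof.
move=> hb Di; apply: ge_inf; last by exists i.
by exists b => _ [j Dj <-]; exact: hb.
Qed.

Lemma le_inf_img (D : set I) (h : I -> R) (c : R) :
  D !=set0 -> (forall j, D j -> c <= h j) -> c <= inf [set h j | j in D].
Proof.
move=> [i Di] hc; apply: lb_le_inf; first by exists (h i), i.
by move=> _ [j Dj <-]; exact: hc.
Qed.

Lemma inf_add_img (D1 D2 : set I) (h1 h2 : I -> R) (b1 b2 c : R) :
  D1 !=set0 -> D2 !=set0 ->
  (forall j, D1 j -> b1 <= h1 j) -> (forall j, D2 j -> b2 <= h2 j) ->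
  (forall i j, D1 i -> D2 j -> c <= h1 i + h2 j) ->
  c <= inf [set h1 j | j in D1] + inf [set h2 j | j in D2].
Proof.
move=> n1 n2 l1 l2 H.
have H1 : forall j, D2 j -> c - h2 j <= inf [set h1 j | j in D1].
  move=> j D2j; apply: le_inf_img => // i D1i; have := H i j D1i D2j; lra.
have : c - inf [set h1 j | j in D1] <= inf [set h2 j | j in D2].
  apply: le_inf_img => // j D2j; have := H1 j D2j; lra.
lra.
Qed.

Lemma inf_scale_img (D1 D2 : set I) (h1 h2 : I -> R) (b1 b2 a : R) :
  0 < a -> D1 !=set0 -> D2 !=set0 ->
  (forall j, D1 j -> b1 <= h1 j) -> (forall j, D2 j -> b2 <= h2 j) ->
  (forall i, D1 i -> exists2 j, D2 j & h2 j <= a * h1 i) ->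
  (forall j, D2 j -> exists2 i, D1 i & a * h1 i <= h2 j) ->
  inf [set h2 j | j in D2] = a * inf [set h1 j | j in D1].
Proof.
move=> a0 n1 n2 l1 l2 H12 H21; apply/le_anti/andP; split.
  rewrite -ler_pdivrMl //; apply: le_inf_img => // i D1i.
  have [j D2j hj] := H12 i D1i; rewrite ler_pdivrMl //.
  exact: le_trans (inf_le_img l2 D2j) hj.
apply: le_inf_img => // j D2j; have [i D1i hi] := H21 j D2j.
apply: le_trans hi; rewrite ler_pM2l //; exact: inf_le_img l1 D1i.
Qed.

Lemma inf_const_img (D : set I) (h : I -> R) (c : R) :
  D !=set0 -> (forall j, D j -> h j = c) -> inf [set h j | j in D] = c.
Proof.
move=> [i Di] hc; apply/le_anti/andP; split.
  rewrite -(hc i Di); apply: (inf_le_img (b := c)) => // j Dj; by rewrite hc.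
by apply: le_inf_img; [exists i | move=> j Dj; rewrite hc].
Qed.
End InfLemmas.
Section HB.
Variable R : realType.
Variable T : Type.

Definition sc (a : R) (u : T -> R) : T -> R := fun t => a * u t.

Lemma bddD (u v : T -> R) : is_bounded u -> is_bounded v -> is_bounded (u \+ v).
Proof.
move=> [M hM] [N hN]; exists (M + N) => t /=.
by apply: le_trans (ler_normD _ _) _; apply: lerD.
Qed.

Lemma bddZ a (u : T -> R) : is_bounded u -> is_bounded (sc a u).
Proof.
move=> [M hM]; exists (`|a| * M) => t; rewrite /sc normrM.
by apply: ler_wpM2l.
Qed.

Definition sublin (p : (T -> R) -> R) :=
  (forall u v, is_bounded u -> is_bounded v -> p (u \+ v) <= p u + p v) /\
  (forall a u, 0 <= a -> is_bounded u -> p (sc a u) = a * p u).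

Lemma sublin_lb p q : sublin p -> (forall u, is_bounded u -> p u <= q u) ->
  forall u, is_bounded u -> - q (sc (-1) u) <= p u.
Proof.
move=> [pD pZ] pq u bu.
have e : u \+ sc (-1) u = sc 0 u by apply/funext => t; rewrite /sc /=; ring.
have := pD _ _ bu (bddZ (-1) bu); rewrite e pZ // mul0r.
have := pq _ (bddZ (-1) bu); lra.
Qed.

Lemma chain_inf q (C : set ((T -> R) -> R)) : sublin q -> C !=set0 ->
  (forall p, C p -> sublin p /\ forall u, is_bounded u -> p u <= q u) ->
  (forall p1 p2, C p1 -> C p2 -> (forall u, is_bounded u -> p1 u <= p2 u) \/
                                  (forall u, is_bounded u -> p2 u <= p1 u)) ->
  let m := fun u => if `[< is_bounded u >] then inf [set p u | p in C] else 0 in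
  sublin m /\ (forall p u, C p -> is_bounded u -> m u <= p u).
Proof.
move=> sq nC HC Htot m.
have lb u : is_bounded u -> forall p, C p -> - q (sc (-1) u) <= p u.
  move=> bu p Cp; have [sp pq] := HC p Cp; exact: sublin_lb.
have mE u : is_bounded u -> m u = inf [set p u | p in C].
  by move=> bu; rewrite /m asboolT.
split; last first.
  by move=> p u Cp bu; rewrite mE //; apply: inf_le_img (lb u bu) Cp.
split.
  move=> u v bu bv; rewrite !mE //; last exact: bddD.
  apply: (inf_add_img nC nC (lb u bu) (lb v bv)) => p1 p2 C1 C2.
  have [s1 _] := HC p1 C1; have [s2 _] := HC p2 C2.
  case: (Htot p1 p2 C1 C2) => h.
  - apply: le_trans (inf_le_img (h := fun p => p (u \+ v)) (lb _ (bddD bu bv)) C1) _.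
    apply: le_trans (s1.1 _ _ bu bv) _; rewrite lerD2l; exact: h.
  - apply: le_trans (inf_le_img (h := fun p => p (u \+ v)) (lb _ (bddD bu bv)) C2) _.
    apply: le_trans (s2.1 _ _ bu bv) _; rewrite lerD2r; exact: h.
move=> a u a0 bu; rewrite !mE //; last exact: bddZ.
have [->|apos] := eqVneq a 0.
  rewrite mul0r; apply: inf_const_img => // p Cp.
  by have [[_ pZ] _] := HC p Cp; rewrite pZ // mul0r.
have a0' : 0 < a by rewrite lt_def apos a0.
apply: (inf_scale_img a0' nC nC (lb u bu) (lb _ (bddZ a bu))).
  by move=> p Cp; exists p => //; have [[_ pZ] _] := HC p Cp; rewrite pZ.
by move=> p Cp; exists p => //; have [[_ pZ] _] := HC p Cp; rewrite pZ.
Qed.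


Lemma pv_props p v : sublin p -> is_bounded v ->
  let pv := fun w => if `[< is_bounded w >] then
     inf [set p (w \+ sc s v) - s * p v | s in [set s : R | 0 <= s]] else 0 in
  sublin pv /\ (forall w, is_bounded w -> pv w <= p w) /\
  (forall w, is_bounded w -> pv w <= p (w \+ v) - p v).
Proof.
move=> [pD pZ] bv pv.
have bs s : is_bounded (sc s v) by exact: bddZ.
have lb w : is_bounded w -> forall s, [set s : R | 0 <= s] s ->
    - p (sc (-1) w) <= p (w \+ sc s v) - s * p v.
  move=> bw s /= s0.
  have e : sc s v = (w \+ sc s v) \+ sc (-1) w.
    by apply/funext => t; rewrite /sc /=; ring.
  have := pD _ _ (bddD bw (bs s)) (bddZ (-1) bw); rewrite -e pZ //; lra.
have pvE w : is_bounded w -> pv w =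
    inf [set p (w \+ sc s v) - s * p v | s in [set s : R | 0 <= s]].
  by move=> bw; rewrite /pv asboolT.
have nD : [set s : R | 0 <= s] !=set0 by exists 0 => /=.
split; last split.
- split.
  + move=> w1 w2 b1 b2; rewrite !pvE //; last exact: bddD.
    apply: (inf_add_img nD nD (lb _ b1) (lb _ b2)) => s1 s2 /= h1 h2.
    have h12 : [set s : R | 0 <= s] (s1 + s2) by rewrite /= addr_ge0.
    apply: le_trans (inf_le_img (h := fun s => p ((w1 \+ w2) \+ sc s v) - s * p v)
       (lb _ (bddD b1 b2)) h12) _.
    have e : (w1 \+ w2) \+ sc (s1 + s2) v = (w1 \+ sc s1 v) \+ (w2 \+ sc s2 v).
      by apply/funext => t; rewrite /sc /=; ring.
    rewrite e; have := pD _ _ (bddD b1 (bs s1)) (bddD b2 (bs s2)); lra.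
  + move=> a w a0 bw; rewrite !pvE //; last exact: bddZ.
    have [->|apos] := eqVneq a 0.
      rewrite mul0r; apply: inf_const_img => // s /= s0.
      have -> : sc 0 w \+ sc s v = sc s v by apply/funext => t; rewrite /sc /=; ring.
      by rewrite pZ // subrr.
    have a0' : 0 < a by rewrite lt_def apos a0.
    apply: (inf_scale_img a0' nD nD (lb _ bw) (lb _ (bddZ a bw))).
      move=> s /= s0; exists (a * s); first by rewrite /= mulr_ge0.
      have -> : sc a w \+ sc (a * s) v = sc a (w \+ sc s v).
        by apply/funext => t; rewrite /sc /=; ring.
      rewrite pZ //; last exact: bddD; lra.
    move=> s /= s0; exists (s / a); first by rewrite /= divr_ge0.
    have e : sc a w \+ sc s v = sc a (w \+ sc (s / a) v).
      apply/funext => t; rewrite /sc /=; field; exact: apos.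
    rewrite e pZ //; last exact: bddD.
    rewrite mulrBr mulrA mulrCA divff // mulr1; lra.
- move=> w bw; rewrite pvE //.
  have h0 : [set s : R | 0 <= s] 0 by rewrite /=.
  apply: le_trans (inf_le_img (lb _ bw) h0) _.
  have -> : w \+ sc 0 v = w by apply/funext => t; rewrite /sc /=; ring.
  lra.
- move=> w bw; rewrite pvE //.
  have h1 : [set s : R | 0 <= s] 1 by rewrite /=.
  apply: le_trans (inf_le_img (lb _ bw) h1) _.
  have -> : w \+ sc 1 v = w \+ v by apply/funext => t; rewrite /sc /=; ring.
  lra.
Qed.


Lemma hahn_banach q : sublin q -> exists mu : (T -> R) -> R,
  [/\ (forall u v, is_bounded u -> is_bounded v -> mu (u \+ v) = mu u + mu v),
      (forall a u, is_bounded u -> mu (sc a u) = a * mu u) &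
      (forall u, is_bounded u -> mu u <= q u)].
Proof.
move=> sq.
pose S p := [/\ sublin p, (forall u, is_bounded u -> p u <= q u) &
                (forall u, ~ is_bounded u -> p u = 0)].
pose Ts := {p | S p}.
pose Rr (a b : Ts) : bool := `[< forall u, is_bounded u -> sval b u <= sval a u >].
pose qn := fun u => if `[< is_bounded u >] then q u else 0.
have Sqn : S qn.
  have qnE u : is_bounded u -> qn u = q u by move=> bu; rewrite /qn asboolT.
  split.
  - split.
    + by move=> u v bu bv; rewrite !qnE //; [exact: sq.1 | exact: bddD].
    + by move=> a u a0 bu; rewrite !qnE //; [exact: sq.2 | exact: bddZ].
  - by move=> u bu; rewrite qnE.
  - by move=> u bu; rewrite /qn asboolF.
have [t tmax] : exists t : Ts, forall s, Rr t s -> s = t.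
  apply: Zorn.
  - by move=> a; apply/asboolP => u _.
  - move=> a b c /asboolP hab /asboolP hbc; apply/asboolP => u bu.
    exact: le_trans (hbc u bu) (hab u bu).
  - move=> [pa Sa] [pb Sb] /asboolP /= hab /asboolP /= hba.
    have e : pa = pb.
      apply/funext => u; case: (pselect (is_bounded u)) => bu.
        by apply/le_anti; rewrite hab ?hba.
      by case: Sa => _ _ -> //; case: Sb => _ _ ->.
    subst pb; congr exist; exact: Prop_irrelevance.
  - move=> A Atot.
    case: (pselect (A !=set0)) => nA; last first.
      exists (exist _ qn Sqn) => s As; exfalso; apply: nA; by exists s.
    pose C := [set sval s | s in A].
    have nC : C !=set0 by case: nA => s As; exists (sval s), s.
    have HC : forall p, C p -> sublin p /\ forall u, is_bounded u -> p u <= q u.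
      by move=> _ [s As <-]; case: (svalP s) => s1 s2 _.
    have Ctot : forall p1 p2, C p1 -> C p2 ->
        (forall u, is_bounded u -> p1 u <= p2 u) \/
        (forall u, is_bounded u -> p2 u <= p1 u).
      move=> _ _ [s1 A1 <-] [s2 A2 <-].
      case: (Atot s1 s2 A1 A2) => /asboolP h; [right|left]; exact: h.
    have [smC mC] := chain_inf sq nC HC Ctot.
    set m := (fun u => _) in smC mC.
    have Sm : S m.
      split => //.
      - move=> u bu; case: nA => s As.
        apply: le_trans (mC _ _ (ex_intro2 _ _ s As erefl) bu) _.
        by case: (svalP s) => _ + _; apply.
      - by move=> u bu; rewrite /m asboolF.
    exists (exist _ m Sm) => s As; apply/asboolP => u bu /=.
    exact: mC (ex_intro2 _ _ s As erefl) bu.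
case: t tmax => p Sp tmax.
have [[pD pZ] pq p0] := Sp.
have key : forall v w, is_bounded v -> is_bounded w -> p w <= p (w \+ v) - p v.
  move=> v w bv bw.
  have [spv [pvp pvv]] := pv_props (conj pD pZ) bv.
  set pv := (fun w => _) in spv pvp pvv.
  have Spv : S pv.
    split => //.
    - by move=> u bu; apply: le_trans (pvp u bu) (pq u bu).
    - by move=> u bu; rewrite /pv asboolF.
  have := tmax (exist _ pv Spv).
  have -> : Rr (exist _ p Sp) (exist _ pv Spv).
    by apply/asboolP => u bu /=; exact: pvp.
  move=> /(_ isT) /(congr1 sval) /= e.
  have h := pvv w bw; have -> : p w = pv w by rewrite e.
  exact: h.
have pA : forall u v, is_bounded u -> is_bounded v -> p (u \+ v) = p u + p v.
  move=> u v bu bv; apply/le_anti; rewrite pD //=.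
  have := key u v bu bv.
  have -> : v \+ u = u \+ v by apply/funext => t; rewrite /= addrC.
  lra.
have pN : forall u, is_bounded u -> p (sc (-1) u) = - p u.
  move=> u bu; have := pA _ _ bu (bddZ (-1) bu).
  have -> : u \+ sc (-1) u = sc 0 u by apply/funext => t; rewrite /sc /=; ring.
  rewrite pZ // mul0r; lra.
exists p; split => //.
move=> a u bu; case: (leP 0 a) => a0; first exact: pZ.
have -> : sc a u = sc (- a) (sc (-1) u) by apply/funext => t; rewrite /sc /=; ring.
rewrite pZ; [|lra|exact: bddZ]; rewrite pN //; ring.
Qed.

End HB.
Section Main.
Variable R : realType.
Variables (X L : Type) (x0 : X) (f : X -> R) (F : L -> X -> R).
Hypothesis hB : forall x, is_bounded (fun l => F l x).

Local Notation T := (option L).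
Definition gx (x : X) : T -> R := fun i => join_family F f x0 i x.
Definition P (v : T -> R) : R := sup [set v i | i in [set: T]].

Lemma P_ub v i : is_bounded v -> v i <= P v.
Proof.
move=> [M hM]; apply: ub_le_sup; last by exists i.
exists M => _ [j _ <-]; exact: le_trans (ler_norm _) (hM j).
Qed.

Lemma P_le v c : (forall i, v i <= c) -> P v <= c.
Proof.
move=> h; apply: ge_sup; first by exists (v None), None.
by move=> _ [j _ <-].
Qed.

Lemma P_sublin : sublin P.
Proof.
split.
  move=> u v bu bv; apply: P_le => i /=; apply: lerD; exact: P_ub.
move=> a u a0 bu; have [->|apos] := eqVneq a 0.
  rewrite mul0r; apply/le_anti/andP; split.
    by apply: P_le => i; rewrite /sc mul0r.
  by apply: le_trans (P_ub None (bddZ 0 bu)); rewrite /sc mul0r.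
have a0' : 0 < a by rewrite lt_def apos a0.
apply/le_anti/andP; split.
  apply: P_le => i; rewrite /sc ler_pM2l //; exact: P_ub.
rewrite -ler_pdivlMl //; apply: P_le => i; rewrite ler_pdivlMl //.
exact: (P_ub i (bddZ a bu)).
Qed.

Lemma bdd_gx x : is_bounded (gx x).
Proof.
have [M hM] := hB x; exists (Num.max M `|f x - f x0|) => [[l|]] /=.
  by rewrite le_max hM.
by rewrite le_max lexx orbT.
Qed.

Definition csum (c : seq (R * X)) : T -> R :=
  fun i => \sum_(p <- c) p.1 * gx p.2 i.
Definition nonneg (c : seq (R * X)) := all (fun p => 0 <= p.1) c.

Lemma csum_cons p c : csum (p :: c) = sc p.1 (gx p.2) \+ csum c.
Proof. by apply/funext => i; rewrite /csum /sc /= big_cons. Qed.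

Lemma csum_nil : csum [::] = (fun _ => 0).
Proof. by apply/funext => i; rewrite /csum big_nil. Qed.

Lemma bdd0 : is_bounded (fun _ : T => (0 : R)).
Proof. by exists 0 => t; rewrite normr0. Qed.

Lemma bdd_csum c : is_bounded (csum c).
Proof.
elim: c => [|p c IH]; first by rewrite csum_nil; exact: bdd0.
rewrite csum_cons; apply: bddD => //; apply: bddZ; exact: bdd_gx.
Qed.

Lemma csum_cat c1 c2 : csum (c1 ++ c2) = csum c1 \+ csum c2.
Proof. by apply/funext => i; rewrite /csum /= big_cat. Qed.

Lemma csum_scale a c : csum (map (fun p => (a * p.1, p.2)) c) = sc a (csum c).
Proof.
apply/funext => i; rewrite /csum /sc big_map mulr_sumr.
by apply: eq_bigr => p _ /=; rewrite mulrA.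
Qed.

Lemma nonneg_sum c : nonneg c -> 0 <= \sum_(p <- c) p.1.
Proof.
elim: c => [|p c IH]; rewrite ?big_nil ?big_cons //= => /andP[h1 h2].
by rewrite addr_ge0 // IH.
Qed.

Lemma nonneg_sum0 c : nonneg c -> \sum_(p <- c) p.1 = 0 -> forall i, csum c i = 0.
Proof.
elim: c => [|p c IH]; first by move=> _ _ i; rewrite csum_nil.
rewrite big_cons /= => /andP[h1 h2] hs i.
have hc := nonneg_sum h2.
have p0 : p.1 = 0 by lra.
have c0 : \sum_(p <- c) p.1 = 0 by lra.
by rewrite csum_cons /= /sc p0 mul0r add0r IH.
Qed.


Hypothesis hconv : infsup_convex (join_family F f x0).
Hypothesis hopt : forall x, feasible F x -> f x0 <= f x.

Lemma lhs_ge0 :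
  (0 <= ereal_inf [set esupr (fun i => join_family F f x0 i x) | x in [set: X]])%E.
Proof.
apply: le_ereal_inf_tmp => _ [x _ <-].
have [i hi] : exists i, 0 <= join_family F f x0 i x.
  case: (pselect (exists l, 0 < F l x)) => [[l hl]|nE].
    by exists (Some l) => /=; apply: ltW.
  exists None => /=; rewrite subr_ge0; apply: hopt.
  rewrite /feasible /=; apply: ge_ereal_sup => _ [l _ <-].
  rewrite lee_fin leNgt; apply/negP => h; apply: nE; by exists l.
apply: le_trans (ereal_sup_ubound _); last by exists i.
by rewrite lee_fin.
Qed.

Lemma key c : nonneg c -> 0 <= P (csum c).
Proof.
move=> nc; set S := \sum_(p <- c) p.1.
have S0 : 0 <= S by exact: nonneg_sum.
have [SE|Sn] := eqVneq S 0.
  apply: le_trans (P_ub None (bdd_csum c)); by rewrite nonneg_sum0.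
have Sp : 0 < S by rewrite lt_def Sn S0.
pose d := (0 : R, x0).
pose t := fun j : 'I_(size c) => (nth d c j).1 / S.
pose xs := fun j : 'I_(size c) => (nth d c j).2.
have m0 : (0 < size c)%N.
  by move: Sn; rewrite /S; case: c {nc S S0 Sp t xs} => //; rewrite big_nil eqxx.
have t0 : forall j, 0 <= t j.
  move=> j; rewrite /t divr_ge0 ?(ltW Sp) //.
  by move/(all_nthP d): nc; apply; exact: ltn_ord.
have t1 : \sum_(j < size c) t j = 1.
  rewrite /t -mulr_suml.
  have -> : \sum_(j < size c) (nth d c j).1 = S by rewrite /S (big_nth d) big_mkord.
  by rewrite divff.
have H := hconv xs m0 t0 t1.
have := le_trans lhs_ge0 H.
have Hr : (esupr (fun i => (\sum_(j < size c) t j * join_family F f x0 i (xs j))%R)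
           <= (P (csum c) / S)%:E)%E.
  apply: ge_ereal_sup => _ [i _ <-]; rewrite lee_fin.
  have -> : \sum_(j < size c) t j * join_family F f x0 i (xs j) = csum c i / S.
    rewrite /csum mulr_suml (big_nth d) big_mkord; apply: eq_bigr => j _.
    by rewrite /t /xs /gx; ring.
  by rewrite ler_pM2r ?invr_gt0 //; apply: P_ub; exact: bdd_csum.
move=> /le_trans /(_ Hr); rewrite lee_fin => h.
have -> : P (csum c) = P (csum c) / S * S by rewrite divfK.
by rewrite mulr_ge0 // ltW.
Qed.


Definition qf (v : T -> R) : R :=
  inf [set P (v \+ csum c) | c in [set c | nonneg c]].

Lemma qf_lb v : is_bounded v -> forall c, [set c | nonneg c] c ->
  - P (sc (-1) v) <= P (v \+ csum c).
Proof.
move=> bv c /= nc.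
have e : csum c = (v \+ csum c) \+ sc (-1) v.
  by apply/funext => t; rewrite /sc /=; ring.
have := key nc; rewrite {1}e.
have := P_sublin.1 _ _ (bddD bv (bdd_csum c)) (bddZ (-1) bv); lra.
Qed.

Lemma nD : [set c | nonneg c] !=set0.
Proof. by exists [::]. Qed.

Lemma addr0f (v : T -> R) : v \+ (fun _ => 0) = v.
Proof. by apply/funext => t /=; rewrite addr0. Qed.

Lemma qf_le_P v : is_bounded v -> qf v <= P v.
Proof.
move=> bv; have n0 : [set c | nonneg c] [::] by [].
apply: le_trans (inf_le_img (qf_lb bv) n0) _.
by rewrite csum_nil addr0f.
Qed.

Lemma qf_g x : qf (sc (-1) (gx x)) <= 0.
Proof.
have n1 : [set c | nonneg c] [:: (1, x)] by rewrite /= /nonneg /= ler01.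
apply: le_trans (inf_le_img (qf_lb (bddZ (-1) (bdd_gx x))) n1) _.
have -> : sc (-1) (gx x) \+ csum [:: (1, x)] = fun _ => 0.
  by apply/funext => t; rewrite csum_cons csum_nil /sc /=; ring.
by apply: P_le.
Qed.

Lemma nonneg_scale a c : 0 <= a -> nonneg c ->
  nonneg (map (fun p => (a * p.1, p.2)) c).
Proof.
move=> a0; elim: c => [|p c IH] //= /andP[h1 h2].
by rewrite mulr_ge0 // IH.
Qed.

Lemma qf_sublin : sublin qf.
Proof.
split.
  move=> u v bu bv; rewrite /qf.
  apply: (inf_add_img nD nD (qf_lb bu) (qf_lb bv)) => c1 c2 /= n1 n2.
  have n12 : [set c | nonneg c] (c1 ++ c2) by rewrite /= /nonneg all_cat; apply/andP.
  apply: le_trans (inf_le_img (h := fun c => P ((u \+ v) \+ csum c))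
     (qf_lb (bddD bu bv)) n12) _.
  have -> : (u \+ v) \+ csum (c1 ++ c2) = (u \+ csum c1) \+ (v \+ csum c2).
    by rewrite csum_cat; apply/funext => t /=; ring.
  by apply: P_sublin.1; apply: bddD => //; exact: bdd_csum.
move=> a u a0 bu; rewrite /qf.
have [->|apos] := eqVneq a 0.
  rewrite mul0r; apply/le_anti/andP; split.
    have n0 : [set c | nonneg c] [::] by [].
    apply: le_trans (inf_le_img (qf_lb (bddZ 0 bu)) n0) _.
    rewrite csum_nil addr0f; apply: P_le => i; by rewrite /sc mul0r.
  apply: le_inf_img; first exact: nD.
  move=> c /= nc; have -> : sc 0 u \+ csum c = csum c.
    by apply/funext => t; rewrite /sc /=; ring.
  exact: key.
have a0' : 0 < a by rewrite lt_def apos a0.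
apply: (inf_scale_img a0' nD nD (qf_lb bu) (qf_lb (bddZ a bu))).
  move=> c /= nc; exists (map (fun p => (a * p.1, p.2)) c).
    exact: nonneg_scale (ltW a0') nc.
  rewrite csum_scale.
  have -> : sc a u \+ sc a (csum c) = sc a (u \+ csum c).
    by apply/funext => t; rewrite /sc /=; ring.
  rewrite P_sublin.2 //; apply: bddD => //; exact: bdd_csum.
move=> c /= nc; exists (map (fun p => (a^-1 * p.1, p.2)) c).
  by apply: nonneg_scale nc; rewrite invr_ge0 ltW.
have e : sc a u \+ csum c = sc a (u \+ sc a^-1 (csum c)).
  apply/funext => t; rewrite /sc /=; field; exact: apos.
rewrite csum_scale e P_sublin.2 //; exact: bddD bu (bddZ _ (bdd_csum c)).
Qed.

End Main.

Unset Implicit Arguments.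

Theorem theorem4p4 (R : realType) (X L : Type) (x0 : X) (f : X -> R)
    (F : L -> X -> R) :
  (exists x : X, True) -> (exists l : L, True) ->
  feasible F !=set0 ->
  (forall x, is_bounded (fun l => F l x)) ->
  infsup_convex (join_family F f x0) ->
  (exists x1 : X, (esupr (fun l => F l x1) < 0)%E) ->
  ((x0 \in feasible F /\ (f x0)%:E = einf_on (feasible F) f) <->
   (x0 \in feasible F /\
    exists Phi0 : (L -> R) -> R,
      [/\ pos_cont_lin_functional Phi0,
          ((f x0 + Phi0 (fun l => F l x0))%:E
             = einf_on [set: X] (fun x => f x + Phi0 (fun l => F l x))) &
          Phi0 (fun l => F l x0) = 0])).
Proof.
move=> _ [l0 _] _ hB hconv [x1 hx1].
have feasle x : feasible F x -> forall l, F l x <= 0.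
  move=> hx l; rewrite -lee_fin; apply: le_trans hx.
  by apply: ereal_sup_ubound; exists l.
split.
- move=> [hx0 hopt0]; split => //.
  have hx0' : feasible F x0 by rewrite in_setE in hx0.
  have hopt : forall x, feasible F x -> f x0 <= f x.
    move=> x hx; rewrite -lee_fin hopt0; apply: ereal_inf_lbound; by exists x.
  have [mu [muD muZ muq]] := hahn_banach (qf_sublin hB hconv hopt).
  have muP u : is_bounded u -> mu u <= P u.
    move=> bu; apply: le_trans (muq u bu) (qf_le_P hB hconv hopt bu).
  have mu0 : mu (fun _ => 0) = 0.
    have -> : (fun _ : option L => (0 : R)) = sc 0 (fun _ => 0).
      by apply/funext => t; rewrite /sc mul0r.
    by rewrite muZ ?mul0r //; exact: bdd0.
  have muN u : is_bounded u -> mu (sc (-1) u) = - mu u.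
    by move=> bu; rewrite muZ // mulN1r.
  have mono u v : is_bounded u -> is_bounded v -> (forall i, u i <= v i) -> mu u <= mu v.
    move=> bu bv huv.
    have := muP _ (bddD bu (bddZ (-1) bv)).
    rewrite muD //; last exact: bddZ.
    rewrite muN // => h.
    have : P (u \+ sc (-1) v) <= 0.
      by apply: P_le => i; rewrite /sc /=; have := huv i; lra.
    lra.
  have gpos x : 0 <= mu (gx x0 f F x).
    have := le_trans (muq _ (bddZ (-1) (bdd_gx x0 f hB x))) (qf_g hB hconv hopt x).
    rewrite muN //; [lra | exact: bdd_gx].
  pose emb (u : L -> R) : option L -> R := fun i => if i is Some l then u l else 0.
  pose delta : option L -> R := fun i => if i is None then 1 else 0.
  have bemb u : is_bounded u -> is_bounded (emb u).
    move=> [M hM]; exists (Num.max M 0) => [[l|]] /=.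
      by rewrite le_max hM.
    by rewrite normr0 le_max lexx orbT.
  have bdelta : is_bounded delta by exists 1 => [[l|]]; rewrite /= ?normr0 ?normr1.
  have gdec x : gx x0 f F x = emb (fun l => F l x) \+ sc (f x - f x0) delta.
    by apply/funext => [[l|]]; rewrite /gx /sc /emb /delta /=; ring.
  set t := mu delta.
  have t0 : 0 <= t.
    rewrite /t -mu0; apply: mono => //; first exact: bdd0.
    by move=> [l|]; rewrite /delta.
  have embM u M : is_bounded u -> (forall l, `|u l| <= M) -> `|mu (emb u)| <= M.
    move=> bu hM; have M0 : 0 <= M by apply: le_trans (hM l0).
    rewrite ler_norml; apply/andP; split.
      have := muP _ (bddZ (-1) (bemb u bu)); rewrite muN //; last exact: bemb.
      have : P (sc (-1) (emb u)) <= M.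
        apply: P_le => -[l|]; rewrite /sc /emb /=; last by lra.
        have := hM l; rewrite ler_norml => /andP[h1 h2]; lra.
      lra.
    apply: le_trans (muP _ (bemb u bu)) _; apply: P_le => -[l|] //=.
    exact: le_trans (ler_norm _) (hM l).
  have tpos : 0 < t.
    rewrite lt_def t0 andbT; apply/negP => /eqP tz.
    have [e e0 He] : exists2 e : R, 0 < e & forall l, F l x1 <= - e.
      have ub l : ((F l x1)%:E <= esupr (fun l => F l x1))%E.
        by apply: ereal_sup_ubound; exists l.
      move: hx1 ub; case: (esupr (fun l => F l x1)) => [r| |] //.
        move=> hr ub; exists (- r); first by rewrite oppr_gt0 -lte_fin.
        by move=> l; rewrite opprK -lee_fin.
      by move=> _ /(_ l0).
    have one1 : 1 <= mu (emb (fun _ => 1)).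
      have e1 : emb (fun _ => 1) = (fun _ => 1) \+ sc (-1) delta.
        by apply/funext => -[l|]; rewrite /emb /delta /sc /=; ring.
      have b1 : is_bounded (fun _ : option L => (1 : R)).
        by exists 1 => _; rewrite normr1.
      rewrite e1 muD //; last exact: bddZ.
      rewrite muN // -/t tz.
      have := muP _ (bddZ (-1) b1); rewrite muN //.
      have : P (sc (-1) (fun _ : option L => (1 : R))) <= -1.
        by apply: P_le => i; rewrite /sc mulr1.
      lra.
    have h1 : mu (emb (fun l => F l x1)) <= - e.
      have b1 : is_bounded (fun _ : L => (1 : R)) by exists 1 => _; rewrite normr1.
      apply: (@le_trans _ _ (mu (sc (- e) (emb (fun _ => 1))))).
        apply: mono; [exact: bemb | exact: (bddZ _ (bemb _ b1))|].
        move=> [l|]; rewrite /sc /emb /=; last by rewrite mulr0.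
        by rewrite mulr1.
      rewrite muZ; last exact: bemb.
      have := one1; nra.
    have := gpos x1; rewrite gdec muD; [|exact: bemb|exact: bddZ].
    rewrite muZ // -/t tz; lra.
  pose Phi0 := fun u => mu (emb u) / t.
  have embD u v : emb (u \+ v) = emb u \+ emb v.
    by apply/funext => -[l|]; rewrite /emb /= ?addr0.
  have embZ a u : emb (fun l => a * u l) = sc a (emb u).
    by apply/funext => -[l|]; rewrite /emb /sc /= ?mulr0.
  have keyx x : f x0 <= f x + Phi0 (fun l => F l x).
    have := gpos x; rewrite gdec muD; [|exact: bemb|exact: bddZ].
    rewrite muZ // -/t /Phi0 => h.
    have : 0 <= mu (emb (fun l => F l x)) / t + (f x - f x0).
      have -> : mu (emb (fun l => F l x)) / t + (f x - f x0) =
               (mu (emb (fun l => F l x)) + (f x - f x0) * t) / t.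
        by field; rewrite lt0r_neq0.
      by rewrite divr_ge0 // ltW.
    lra.
  have z0 : Phi0 (fun l => F l x0) = 0.
    apply/le_anti/andP; split; last by have := keyx x0; lra.
    rewrite /Phi0 pmulr_lle0 ?invr_gt0 // -mu0; apply: mono; [exact: bemb|exact: bdd0|].
    by move=> -[l|]; rewrite /emb //; exact: feasle.
  exists Phi0; split => //.
  + split.
    * move=> u v bu bv; rewrite /Phi0 embD muD ?mulrDl //; exact: bemb.
    * move=> a u bu; rewrite /Phi0 embZ muZ ?mulrA //; exact: bemb.
    * move=> u bu hu; rewrite /Phi0 divr_ge0 ?(ltW tpos) // -mu0.
      apply: mono; [exact: bdd0|exact: bemb|].
      by move=> -[l|] //=; rewrite /emb.
    * exists t^-1 => u M bu hM; rewrite /Phi0 normrM mulrC gtr0_norm ?invr_gt0 //.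
      by rewrite ler_pM2l ?invr_gt0 //; exact: embM.
  + rewrite z0 addr0; apply/le_anti/andP; split.
      apply: le_ereal_inf_tmp => _ [x _ <-]; rewrite lee_fin; exact: keyx.
    by apply: ereal_inf_lbound; exists x0 => //; rewrite z0 addr0.
- move=> [hx0 [Phi0 [[PD PZ Ppos _] hinf hz]]]; split => //.
  have hx0' : feasible F x0 by rewrite in_setE in hx0.
  apply/le_anti/andP; split; last first.
    by apply: ereal_inf_lbound; exists x0.
  apply: le_ereal_inf_tmp => _ [x hx <-]; rewrite lee_fin.
  have Pn : Phi0 (fun l => F l x) <= 0.
    have := Ppos (fun l => -1 * F l x) (bddZ (-1) (hB x)).
    rewrite PZ // mulN1r oppr_ge0; apply => l.
    by have := feasle x hx l; lra.
  have : ((f x0 + Phi0 (fun l => F l x0))%:E <= (f x + Phi0 (fun l => F l x))%:E)%E.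
    by rewrite hinf; apply: ereal_inf_lbound; exists x.
  rewrite lee_fin hz; lra.
Qed.
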